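(* Let $A$ be an essential arrangement of affine hyperplanes in a real affine space $V$, $f_0$ a non-constant affine-linear function, and for large $t$ let $A_t=A\cup\{\{f_0=t\}\}$. Let $H=\{f=0\}\in A$, let $\Delta$ be a growing domain of $A$ on which $|f|$ is unbounded, and let $\Delta_t=\Delta\cap\{f_0<t\}$. Let $\alpha\in\mathbb C$ and let $g=\exp(\alpha(\log|f|+i\theta))$ be a branch of $f^\alpha$ on $\Delta$, where $\theta$ is a real constant. Then, as $t\to+\infty$, $$c(g,\Delta_t)=c(g,\Delta,f_0)\,t^{\alpha}(1+o(1)),$$ where $t^\alpha=e^{\alpha\log t}$ with real $\log t$.
   Context: Domains and faces are as usual, and a domain is growing if it is unbounded and $f_0\to+\infty$ at infinity in it. $c(g,\Delta_t)$ is the value of $g$ on the external support of the bounded domain $\Delta_t$ of $A_t$ with respect to $f$; the external support of a bounded face $D$ with respect to an affine function $g$ is the face of highest dimension in the set of points of $\bar D$ where $|g|$ is maximal. Let $W=H_\infty\setminus\overline{\{f_0=0\}}$ in the projective completion $\bar V=V\cup H_\infty$, and $h([v])=f^0(v)/f_0^0(v)$ on $W$, with $f^0$ the linear part. $tr(\Delta)$ is the face of highest dimension among the faces of $\bar A$ lying in $H_\infty$ and contained in the closure of $\Delta$ in $\bar V$; it is a bounded face of the arrangement in $W$ of the non-constant functions $f_i^0/f_0^0$. Let $\Sigma'$ be the external support of $tr(\Delta)$ with respect to $h$. Then $c(g,\Delta,f_0)=\exp(\alpha(\log|h(\Sigma')|+i\theta))$. *)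

(* Defs.v *)
From HB Require Import structures.
From mathcomp Require Import all_boot all_order all_algebra.
From mathcomp Require Import all_classical all_reals all_analysis.
From mathcomp Require Import complex.
Set Implicit Arguments. Unset Strict Implicit. Unset Printing Implicit Defensive.
Import Order.TTheory GRing.Theory Num.Theory.
Import numFieldNormedType.Exports.
Local Open Scope classical_set_scope.
Local Open Scope ring_scope.
Local Open Scope complex_scope.

Section Arr.
Variables (R : realType) (n : nat).

Notation V := 'rV[R]_n.

(* An affine-linear function x |-> a.x + b is encoded by the pair (a, b). *)
Definition affn := (V * R)%type.

Definition lin (f : affn) (v : V) : R := \sum_(i < n) f.1 0 i * v 0 i.
Definition aff (f : affn) (x : V) : R := lin f x + f.2.

Definition nonconstant (f : affn) : Prop := f.1 != 0.

Definition hyperplane (f : affn) : set V := [set x | aff f x = 0].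

(* An arrangement of affine hyperplanes, given by a finite list of
   non-constant affine functions (hyperplane {h = 0} for each h). *)
Definition arrangement (A : seq affn) : Prop := all (fun h => h.1 != 0) A.

(* Essential: the linear parts span the dual space (rank n). *)
Definition essential (A : seq affn) : Prop :=
  row_full (\matrix_(i < size A) (nth (0, 0) A i).1).

Definition arr_compl (A : seq affn) : set V :=
  [set x | forall h, h \in A -> aff h x != 0].

Definition hyp_in (H : set V) (A : seq affn) : Prop :=
  exists2 h, h \in A & hyperplane h = H.

Definition is_domain (A : seq affn) (D : set V) : Prop :=
  exists x0, arr_compl A x0 /\ D = connected_component (arr_compl A) x0.

Definition growing (A : seq affn) (f0 : affn) (D : set V) : Prop :=
  is_domain A D /\ ~ bounded_set D /\
  (forall M : R, exists r : R, forall x, D x -> r < `|x| -> M < aff f0 x).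

Definition cexp (z : R[i]) : R[i] :=
  (expR (complex.Re z) * cos (complex.Im z)) +i* (expR (complex.Re z) * sin (complex.Im z)).

(* x is a point of the closure of the bounded set D where |f| is maximal,
   i.e. a point of the set containing the external support of D w.r.t. f *)
Definition ext_pt (D : set V) (f : affn) (x : V) : Prop :=
  closure D x /\ forall y, closure D y -> `|aff f y| <= `|aff f x|.

(* recession cone of the closure of D: the directions [v] (v != 0) of this
   cone are exactly the points of H_oo in the closure of D in the projective
   completion *)
Definition rec_cone (D : set V) : set V :=
  [set v | forall x (s : R), closure D x -> 0 <= s -> closure D (x + s *: v)].

(* h([v]) = f^0(v) / f_0^0(v), defined on W (f_0^0(v) != 0) *)
Definition hinf (f f0 : affn) (v : V) : R := lin f v / lin f0 v.

(* K = |h(Sigma')|: the maximal value of |h| on the closure of tr(Delta)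
   (= the set of [v], v in the recession cone, v != 0). *)
Definition ext_value_inf (D : set V) (f f0 : affn) (K : R) : Prop :=
  (exists v, [/\ rec_cone D v, v != 0, lin f0 v != 0 & `|hinf f f0 v| = K]) /\
  (forall w, rec_cone D w -> w != 0 -> lin f0 w != 0 -> `|hinf f f0 w| <= K).

End Arr.

Definition cmod (R : realType) (z : R[i]) : R :=
  Num.sqrt (complex.Re z ^+ 2 + complex.Im z ^+ 2).

(* Main.v *)
Require Import Defs.
From HB Require Import structures.
From mathcomp Require Import all_boot all_order all_algebra.
From mathcomp Require Import all_classical all_reals all_analysis.
From mathcomp Require Import complex.
From mathcomp Require Import ring lra.
Import Order.TTheory GRing.Theory Num.Theory.
Import numFieldNormedType.Exports.
Local Open Scope classical_set_scope.
Local Open Scope ring_scope.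
Local Open Scope complex_scope.
Set Implicit Arguments. Unset Strict Implicit. Unset Printing Implicit Defensive.
Section LP.
Variables (R : realType) (n : nat).
Local Notation V := 'rV[R]_n.
Implicit Types (a c : affn R n) (x y v : V).

Lemma linD a x y : lin a (x + y) = lin a x + lin a y.
Proof. by rewrite /lin -big_split; apply: eq_bigr => i _; rewrite mxE mulrDr. Qed.
Lemma linZ a (s : R) x : lin a (s *: x) = s * lin a x.
Proof. by rewrite /lin mulr_sumr; apply: eq_bigr => i _; rewrite mxE mulrCA. Qed.
Lemma linN a x : lin a (- x) = - lin a x.
Proof. by rewrite -scaleN1r linZ mulN1r. Qed.
Lemma linB a x y : lin a (x - y) = lin a x - lin a y.
Proof. by rewrite linD linN. Qed.
Lemma lin0 a : lin a 0 = 0.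
Proof. by rewrite -(scale0r 0) linZ mul0r. Qed.
Lemma affDZ a x (s : R) v : aff a (x + s *: v) = aff a x + s * lin a v.
Proof. by rewrite /aff linD linZ addrAC. Qed.
Lemma affB a x y : aff a x - aff a y = lin a (x - y).
Proof. by rewrite /aff linB opprD addrACA subrr addr0. Qed.

Definition Pset (J E : seq (affn R n)) x :=
  (forall a, a \in J -> 0 <= aff a x) /\ (forall e, e \in E -> aff e x = 0).

Lemma LP_unbounded J : forall E c,
  (forall M : R, exists x, Pset J E x /\ M < aff c x) ->
  exists v, [/\ forall a, a \in J -> 0 <= lin a v,
               forall e, e \in E -> lin e v = 0 & 0 < lin c v].
Proof.
elim: J => [|a J IH] E c Hun.
  have [x1 [[_ Hx1] _]] := Hun 0.
  have [x2 [[_ Hx2] lt12]] := Hun (aff c x1).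
  exists (x2 - x1); split => //.
  - by move=> e He; rewrite -affB Hx1 // Hx2 // subrr.
  - by rewrite -affB subr_gt0.
have [v [Jv Ev cv]] : exists v, [/\ forall a, a \in J -> 0 <= lin a v,
               forall e, e \in E -> lin e v = 0 & 0 < lin c v].
  apply: IH => M; have [x [[Jx Ex] Mx]] := Hun M.
  exists x; split => //; split => // a' Ha'; apply: Jx; by rewrite inE Ha' orbT.
have [av|av] := leP 0 (lin a v).
  exists v; split => // a' /[!inE] /orP[/eqP->//|]; exact: Jv.
have Hface : forall M : R, exists x, Pset J (a :: E) x /\ M < aff c x.
  move=> M; have [x [[Jx Ex] Mx]] := Hun M.
  have ax : 0 <= aff a x by apply: Jx; rewrite inE eqxx.
  set s := aff a x / (- lin a v).
  have s0 : 0 <= s by rewrite divr_ge0 // oppr_ge0 ltW.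
  exists (x + s *: v); split; last first.
    by rewrite affDZ (lt_le_trans Mx) // lerDl mulr_ge0 // ltW.
  split.
  - move=> a' Ha'; rewrite affDZ addr_ge0 //; first by apply: Jx; rewrite inE Ha' orbT.
    exact: (mulr_ge0 s0 (Jv _ Ha')).
  - move=> e /[!inE] /orP[/eqP->|He].
      rewrite affDZ /s invrN mulrN mulNr -mulrA mulVf ?mulr1 ?subrr //.
      by rewrite lt_eqF.
    by rewrite affDZ Ex // Ev // mulr0 addr0.
have [w [Jw Ew cw]] := IH (a :: E) c Hface.
exists w; split => //.
- move=> a' /[!inE] /orP[/eqP->|]; last exact: Jw.
  by rewrite (Ew a) // inE eqxx.
- by move=> e He; apply: Ew; rewrite inE He orbT.
Qed.

Lemma Pset_sub a J E x : Pset (a :: J) E x -> Pset J E x.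
Proof. by case=> HJ HE; split=> // a' Ha'; apply: HJ; rewrite inE Ha' orbT. Qed.

Lemma Pset_face a J E x : Pset J (a :: E) x -> Pset (a :: J) E x.
Proof.
case=> HJ HE; split; last by move=> e He; apply: HE; rewrite inE He orbT.
move=> a' /[!inE] /orP[/eqP->|]; last exact: HJ.
by rewrite HE // inE eqxx.
Qed.

Lemma LP_attain J : forall E c, (exists x, Pset J E x) ->
  (exists B, forall x, Pset J E x -> aff c x <= B) ->
  exists xs, Pset J E xs /\ forall x, Pset J E x -> aff c x <= aff c xs.
Proof.
elim: J => [|a J IH] E c [x1 Px1] [B HB].
  exists x1; split => // x Px; rewrite leNgt; apply/negP => lt.
  have l0 : 0 < lin c (x - x1) by rewrite -affB subr_gt0.
  set s := (B - aff c x1) / lin c (x - x1) + 1.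
  have Pz : Pset [::] E (x1 + s *: (x - x1)).
    case: Px1 => _ E1; case: Px => _ E2; split => // e He.
    by rewrite affDZ -affB E2 // E1 // subrr mulr0 addr0.
  have := HB _ Pz; rewrite affDZ /s mulrDl mul1r -mulrA mulVf ?gt_eqF //.
  by rewrite mulr1 addrA [aff c x1 + _]addrC subrK gerDl leNgt l0.
have Hred : (exists xs, Pset (a :: J) E xs /\ forall x, Pset (a :: J) E x -> aff c x <= aff c xs) \/
  (forall y, Pset (a :: J) E y -> exists z, Pset J (a :: E) z /\ aff c y <= aff c z).
  case: (pselect (exists B, forall x, Pset J E x -> aff c x <= B)) => [bd|ubd].
    have [xs [Pxs Hxs]] := IH E c (ex_intro _ x1 (Pset_sub Px1)) bd.
    have [axs|axs] := leP 0 (aff a xs).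
      left; exists xs; split; last by move=> x /Pset_sub; exact: Hxs.
      case: Pxs => HJ HE; split => // a' /[!inE] /orP[/eqP->//|]; exact: HJ.
    right => y Py; have [HJy HEy] := Py.
    have ay : 0 <= aff a y by apply: HJy; rewrite inE eqxx.
    have d0 : 0 < aff a y - aff a xs by rewrite subr_gt0 (lt_le_trans axs).
    set s := aff a y / (aff a y - aff a xs).
    have s0 : 0 <= s by rewrite divr_ge0 // ltW.
    have s1 : s <= 1 by rewrite ler_pdivrMr // mul1r lerDl oppr_ge0 ltW.
    exists (y + s *: (xs - y)); split; last first.
      by rewrite affDZ -affB lerDl mulr_ge0 // subr_ge0 (Hxs _ (Pset_sub Py)).
    split.
    - move=> a' Ha'; rewrite affDZ -affB.
      have -> : aff a' y + s * (aff a' xs - aff a' y) = (1 - s) * aff a' y + s * aff a' xs.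
        by ring.
      rewrite addr_ge0 // mulr_ge0 ?subr_ge0 //; first by apply: HJy; rewrite inE Ha' orbT.
      by case: Pxs => HJ _; apply: HJ.
    - move=> e /[!inE] /orP[/eqP->|He].
        by rewrite affDZ -affB /s; field; rewrite gt_eqF.
      by rewrite affDZ -affB HEy //; case: Pxs => _ ->; rewrite ?subrr ?mulr0 ?addr0.
  have Hun : forall M : R, exists x, Pset J E x /\ M < aff c x.
    move=> M; apply: contra_notP ubd => H; exists M => x Px; rewrite leNgt; apply/negP => lt.
    by apply: H; exists x.
  have [v [Jv Ev cv]] := LP_unbounded Hun.
  have [av|av] := leP 0 (lin a v).
    exfalso; have [HJ1 HE1] := Px1.
    set s := (B - aff c x1) / lin c v + 1.
    have s0 : 0 <= s.
      by rewrite addr_ge0 // divr_ge0 ?(ltW cv) // subr_ge0; apply: HB.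
    have Pz : Pset (a :: J) E (x1 + s *: v).
      split.
      - move=> a' /[!inE] /orP[/eqP->|Ha'].
          by rewrite affDZ addr_ge0 ?(mulr_ge0 s0 av) //; apply: HJ1; rewrite inE eqxx.
        by rewrite affDZ addr_ge0 ?(mulr_ge0 s0 (Jv _ Ha')) //; apply: HJ1; rewrite inE Ha' orbT.
      - by move=> e He; rewrite affDZ HE1 // Ev // mulr0 addr0.
    have := HB _ Pz; rewrite affDZ /s mulrDl mul1r -mulrA mulVf ?gt_eqF //.
    by rewrite mulr1 addrA [aff c x1 + _]addrC subrK gerDl leNgt cv.
  right => y [HJy HEy].
  have ay : 0 <= aff a y by apply: HJy; rewrite inE eqxx.
  set s := aff a y / (- lin a v).
  have s0 : 0 <= s by rewrite divr_ge0 // oppr_ge0 ltW.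
  exists (y + s *: v); split; last by rewrite affDZ lerDl mulr_ge0 // ltW.
  split.
  - move=> a' Ha'; rewrite affDZ addr_ge0 //; first by apply: HJy; rewrite inE Ha' orbT.
    exact: (mulr_ge0 s0 (Jv _ Ha')).
  - move=> e /[!inE] /orP[/eqP->|He].
      rewrite affDZ /s invrN mulrN mulNr -mulrA mulVf ?mulr1 ?subrr //.
      by rewrite lt_eqF.
    by rewrite affDZ HEy // Ev // mulr0 addr0.
case: Hred => [//|Hred].
have [z [Pz _]] := Hred _ Px1.
have [zs [Pzs Hzs]] := IH (a :: E) c (ex_intro _ z Pz)
  (ex_intro _ B (fun x Px => HB x (Pset_face Px))).
exists zs; split; first exact: Pset_face.
move=> x Px; have [z' [Pz' le']] := Hred _ Px.
exact: (le_trans le' (Hzs _ Pz')).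
Qed.
End LP.
Section Geo.
Variables (R : realType) (n : nat).
Local Notation V := 'rV[R]_n.
Implicit Types (a c h : affn R n) (x y v : V).

Lemma lin_cont h : continuous (lin h).
Proof.
rewrite /lin; elim: (index_enum _) => [|i s IH].
  by under eq_fun do rewrite big_nil; exact: cst_continuous.
under eq_fun do rewrite big_cons.
move=> x; apply: (@continuousD _ _ _ (fun z : V => h.1 0 i * z 0 i) (fun z : V => \sum_(j <- s) h.1 0 j * z 0 j)); last exact: IH.
apply: continuousM; first exact: cst_continuous.
exact: coord_continuous.
Qed.

Lemma aff_cont h : continuous (aff h).
Proof. move=> x; apply: continuousD; [exact: lin_cont|exact: cst_continuous]. Qed.

Lemma open_pos (g : V -> R) : continuous g -> open [set x | 0 < g x].
Proof. by move=> cg; exact: (proj1 (continuousP g) cg _ (@open_gt R 0)). Qed.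

Lemma closed_nneg (g : V -> R) : continuous g -> closed [set x | 0 <= g x].
Proof. by move=> cg; exact: (proj1 (continuous_closedP g) cg _ (@closed_ge R 0)). Qed.

Lemma closure_nneg (g : V -> R) (Q : set V) : continuous g ->
  (forall x, Q x -> 0 <= g x) -> forall x, closure Q x -> 0 <= g x.
Proof.
move=> cg HQ x Hx.
have : closure [set x | 0 <= g x] x by apply: (closure_subset _ Hx) => z /HQ.
by rewrite -(proj1 (closure_id _) (closed_nneg cg)).
Qed.

Lemma approx (Q : set V) y p :
  (forall e : R, 0 < e -> e <= 1 -> Q (y + e *: (p - y))) -> closure Q y.
Proof.
move=> HQ B /nbhs_ballP [r r0 HB].
set e := Num.min 1 (r / (2 * (`|p - y| + 1))).
have e0 : 0 < e.
  by rewrite lt_min ltr01 divr_gt0 // mulr_gt0 // ltr_pwDr.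
have e1 : e <= 1 by rewrite ge_min lexx.
exists (y + e *: (p - y)); split; first exact: HQ.
apply: HB; rewrite -ball_normE /= opprD addrA subrr add0r normrN normrZ.
rewrite gtr0_norm //.
have le : e <= r / (2 * (`|p - y| + 1)) by rewrite ge_min lexx orbT.
rewrite (le_lt_trans (ler_wpM2r (normr_ge0 _) le)) //.
rewrite mulrAC ltr_pdivrMr ?mulr_gt0 ?ltr_pwDr // ltr_pM2l //.
have := normr_ge0 (p - y); lra.
Qed.
End Geo.
Section Cell.
Variables (R : realType) (n : nat) (A : seq (affn R n)) (x0 : 'rV[R]_n).
Local Notation V := 'rV[R]_n.
Hypothesis hx0 : arr_compl A x0.
Implicit Types (a c h : affn R n) (x y v : V).

Definition S x := forall h, h \in A -> 0 < aff h x0 * aff h x.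
Definition Sb x := forall h, h \in A -> 0 <= aff h x0 * aff h x.

Lemma sq_pos (a : R) : a != 0 -> 0 < a * a.
Proof. by move=> a0; rewrite -expr2 exprn_even_gt0. Qed.

Lemma S_x0 : S x0.
Proof. by move=> h hA; apply: sq_pos; apply: hx0. Qed.

Lemma S_Sb x : S x -> Sb x.
Proof. by move=> Sx h hA; apply: ltW; apply: Sx. Qed.

Lemma S_compl x : S x -> arr_compl A x.
Proof.
move=> Sx h hA; apply/negP => /eqP e; have := Sx h hA.
by rewrite e mulr0 ltxx.
Qed.

Lemma aff_comb h y p (e : R) :
  aff h (y + e *: (p - y)) = (1 - e) * aff h y + e * aff h p.
Proof. rewrite affDZ -affB; ring. Qed.

Lemma S_conv y p (e : R) : Sb y -> S p -> 0 < e -> e <= 1 -> S (y + e *: (p - y)).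
Proof.
move=> Sy Sp e0 e1 h hA; rewrite aff_comb.
have -> : aff h x0 * ((1 - e) * aff h y + e * aff h p) =
  (1 - e) * (aff h x0 * aff h y) + e * (aff h x0 * aff h p) by ring.
apply: ltr_wpDl; [apply: mulr_ge0; [by rewrite subr_ge0|exact: Sy]| apply: mulr_gt0 => //; exact: Sp].
Qed.

Lemma S_conv2 y p (e : R) : S y -> S p -> 0 <= e -> e <= 1 -> S (y + e *: (p - y)).
Proof.
move=> Sy Sp e0 e1; have [->|e0'] := eqVneq e 0.
  by rewrite scale0r addr0.
by apply: S_conv => //; [exact: S_Sb| rewrite lt_def e0' e0].
Qed.

Lemma Delta_S : connected_component (arr_compl A) x0 = S.
Proof.
apply/seteqP; split.
  move=> y [C [Cx0 CA Cc] Cy] h hA.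
  pose g := fun x => aff h x0 * aff h x.
  have cg : continuous g by move=> x; apply: (@continuousM _ _ (fun=> aff h x0) (aff h)); [exact: cst_continuous|exact: aff_cont].
  set B := C `&` [set x | 0 < g x].
  have : B = C.
    apply: Cc.
    - by exists x0; split => //; apply: S_x0.
    - by exists [set x | 0 < g x] => //; exact: open_pos.
    - exists [set x | 0 <= g x]; first exact: closed_nneg.
      apply/seteqP; split => x [Cx gx]; split => //; first exact: ltW.
      rewrite /= lt_def gx andbT /g mulf_neq0 //; [exact: hx0|exact: CA].
  by move=> eB; rewrite -eB in Cy; case: Cy.
move=> y Sy.
pose f := fun s : R => x0 + s *: (y - x0).
have cf : continuous f.
  move=> s; apply: (@continuousD _ _ _ (fun=> x0) (fun s : R => s *: (y - x0))).
    exact: cst_continuous.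
  by apply: continuousZr_tmp.
exists (f @` `[0, 1]); last first.
  by exists 1; [rewrite /= in_itv /= lexx ler01|rewrite /f scale1r addrC subrK].
split.
- by exists 0; [rewrite /= in_itv /= lexx ler01|rewrite /f scale0r addr0].
- move=> z [s]; rewrite /= in_itv /= => /andP[s0 s1] fs; rewrite -fs; apply: S_compl; apply: S_conv2 => //.
  exact: S_x0.
- apply: connected_continuous_connected; first exact: segment_connected.
  exact: continuous_subspaceT.
Qed.

Lemma closure_S : closure S = Sb.
Proof.
apply/seteqP; split.
  move=> x Cx h hA.
  apply: (@closure_nneg _ _ (fun x => aff h x0 * aff h x) S) => //.
    by move=> z; apply: (@continuousM _ _ (fun=> aff h x0) (aff h)); [exact: cst_continuous|exact: aff_cont].
  by move=> z Sz; apply: ltW; apply: Sz.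
move=> y Sy; apply: (@approx _ _ _ _ x0) => e e0 e1.
by apply: S_conv => //; exact: S_x0.
Qed.

Lemma closure_St (f0 : affn R n) (t : R) p : S p -> aff f0 p < t ->
  closure (S `&` [set x | aff f0 x < t]) = Sb `&` [set x | aff f0 x <= t].
Proof.
move=> Sp fp; apply/seteqP; split.
  move=> x Cx; split.
    by rewrite -closure_S; apply: (closure_subset _ Cx) => z [].
  rewrite /= -subr_ge0.
  apply: (@closure_nneg _ _ (fun x => t - aff f0 x) (S `&` [set x | aff f0 x < t])) => //.
    move=> z; apply: (@continuousD _ _ _ (fun=> t) (fun x => - aff f0 x)).
      exact: cst_continuous.
    by apply: continuousN; exact: aff_cont.
  by move=> z [_ /= ?]; rewrite subr_ge0 ltW.
move=> y [Sy fy]; apply: (approx (p := p)) => e e0 e1; split.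
  exact: S_conv.
rewrite /= aff_comb.
have : (1 - e) * aff f0 y <= (1 - e) * t by rewrite ler_wpM2l // subr_ge0.
have : e * aff f0 p < e * t by rewrite ltr_pM2l.
lra.
Qed.

End Cell.
Lemma lin_scl (R : realType) (n : nat) (k : R) (a : affn R n) (b : R) v :
  lin (k *: a.1, b) v = k * lin a v.
Proof. by rewrite /lin mulr_sumr; apply: eq_bigr => i _; rewrite mxE mulrA. Qed.
Lemma lin_addl (R : realType) (n : nat) (a c : affn R n) (b : R) v :
  lin (a.1 + c.1, b) v = lin a v + lin c v.
Proof. by rewrite /lin -big_split; apply: eq_bigr => i _; rewrite mxE mulrDl. Qed.
Lemma lin_fst (R : realType) (n : nat) (a : affn R n) (b : R) v :
  lin (a.1, b) v = lin a v.
Proof. by []. Qed.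

Definition lc (R : realType) (n : nat) (s k : R) (a b : affn R n) : affn R n :=
  (s *: a.1 + k *: b.1, s * a.2 + k * b.2).
Lemma lin_lc (R : realType) (n : nat) (s k : R) (a b : affn R n) v :
  lin (lc s k a b) v = s * lin a v + k * lin b v.
Proof.
rewrite /lc (lin_addl (s *: a.1, 0) (k *: b.1, 0)).
by rewrite (lin_scl _ a) (lin_scl _ b).
Qed.
Lemma aff_lc (R : realType) (n : nat) (s k : R) (a b : affn R n) v :
  aff (lc s k a b) v = s * aff a v + k * aff b v.
Proof. rewrite /aff lin_lc /lc /=; ring. Qed.
Definition sc (R : realType) (n : nat) (k : R) (a : affn R n) := lc k 0 a a.
Lemma lin_sc (R : realType) (n : nat) (k : R) (a : affn R n) v :
  lin (sc k a) v = k * lin a v.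
Proof. by rewrite lin_lc mul0r addr0. Qed.
Lemma aff_sc (R : realType) (n : nat) (k : R) (a : affn R n) v :
  aff (sc k a) v = k * aff a v.
Proof. by rewrite aff_lc mul0r addr0. Qed.

Section Main.
Variables (R : realType) (n : nat) (A : seq (affn R n)) (x0 : 'rV[R]_n) (f0 f : affn R n).
Local Notation V := 'rV[R]_n.
Hypothesis hx0 : arr_compl A x0.
Hypothesis grow : forall M : R, exists r : R, forall x, S A x0 x -> r < `|x| -> M < aff f0 x.
Hypothesis unbf : forall M : R, exists2 x, S A x0 x & M < `|aff f x|.
Implicit Types (a c h : affn R n) (x y v w : V).

Local Notation S := (S A x0).
Local Notation Sb := (Sb A x0).

Definition C0 v := forall h, h \in A -> 0 <= aff h x0 * lin h v.
Definition J := [seq sc (aff h x0) h | h <- A].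

Lemma PJ x : Pset J [::] x <-> Sb x.
Proof.
split.
  by move=> [HJ _] h hA; rewrite -aff_sc; apply: HJ; apply/mapP; exists h.
by move=> Sx; split => // a /mapP [h hA ->]; rewrite aff_sc; exact: Sx.
Qed.

Lemma JC0 v : (forall a, a \in J -> 0 <= lin a v) <-> C0 v.
Proof.
split.
  by move=> HJ h hA; rewrite -lin_sc; apply: HJ; apply/mapP; exists h.
by move=> Cv a /mapP [h hA ->]; rewrite lin_sc; exact: Cv.
Qed.

Lemma C0Z k v : 0 <= k -> C0 v -> C0 (k *: v).
Proof. by move=> k0 Cv h hA; rewrite linZ mulrCA mulr_ge0 //; exact: Cv. Qed.

Lemma S_ray v s : C0 v -> 0 <= s -> S (x0 + s *: v).
Proof.
move=> Cv s0 h hA; rewrite affDZ mulrDr mulrCA (lt_le_trans (sq_pos (hx0 hA))) //.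
by rewrite lerDl mulr_ge0 //; exact: Cv.
Qed.

Lemma Sb_ray x v s : Sb x -> C0 v -> 0 <= s -> Sb (x + s *: v).
Proof.
move=> Sx Cv s0 h hA; rewrite affDZ mulrDr mulrCA.
apply: addr_ge0; [exact: Sx | apply: mulr_ge0 => //; exact: Cv].
Qed.

Lemma nz_of_lin c v : lin c v != 0 -> v != 0.
Proof. by apply: contraNneq => ->; rewrite lin0. Qed.

Lemma C0_pos v : C0 v -> v != 0 -> 0 < lin f0 v.
Proof.
move=> Cv v0; rewrite ltNge; apply/negP => le0.
have [r Hr] := grow (aff f0 x0).
have nv : 0 < `|v| by rewrite normr_gt0.
set s := (`|r| + `|x0| + 1) / `|v|.
have s0 : 0 <= s by rewrite divr_ge0 // addr_ge0.
have Hlt : r < `|x0 + s *: v|.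
  have : `|s *: v| <= `|x0 + s *: v| + `|x0|.
    by rewrite -[X in `|X| <= _](addKr x0) addrC ler_normB.
  rewrite normrZ ger0_norm // /s divfK ?gt_eqF //.
  have := ler_norm r; lra.
have := Hr (x0 + s *: v) (S_ray Cv s0) Hlt.
rewrite affDZ ltrDl; apply/negP; rewrite -leNgt.
exact: mulr_ge0_le0.
Qed.

Lemma closureS : closure S = Sb.
Proof. exact: closure_S. Qed.

Lemma rec_C0 v : rec_cone S v <-> C0 v.
Proof.
split; last first.
  by move=> Cv x s; rewrite closureS => Sx s0; apply: Sb_ray.
move=> Hr h hA; rewrite leNgt; apply/negP => neg.
set m := aff h x0 * lin h v in neg.
set s := (aff h x0 * aff h x0) / (- m) + 1.
have s0 : 0 <= s.
  apply: addr_ge0 => //; apply: divr_ge0; [by rewrite -expr2 sqr_ge0 | by rewrite oppr_ge0 ltW].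
have := Hr x0 s; rewrite closureS => /(_ (S_Sb (S_x0 hx0)) s0 h hA).
rewrite affDZ mulrDr mulrCA -/m.
have -> : aff h x0 * aff h x0 + s * m = m.
  by rewrite /s; field; rewrite lt_eqF.
by rewrite leNgt neg.
Qed.

Lemma ub_or_dir c : (exists B, forall x, Sb x -> aff c x <= B) \/ (exists w, C0 w /\ 0 < lin c w).
Proof.
case: (pselect (exists B, forall x, Sb x -> aff c x <= B)) => [|nb]; first by left.
right.
have Hun : forall M : R, exists x, Pset J [::] x /\ M < aff c x.
  move=> M; apply: contra_notP nb => H; exists M => x Sx; rewrite leNgt; apply/negP => lt.
  by apply: H; exists x; split => //; apply/PJ.
have [w [Jw _ cw]] := LP_unbounded Hun.
by exists w; split => //; apply/JC0.
Qed.

Lemma dir_f : exists w, C0 w /\ lin f w != 0.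
Proof.
case: (ub_or_dir f) => [[B1 HB1]|[w [Cw lw]]]; last by exists w; rewrite gt_eqF.
case: (ub_or_dir (sc (-1) f)) => [[B2 HB2]|[w [Cw lw]]]; last first.
  by exists w; split => //; move: lw; rewrite lin_sc mulN1r oppr_gt0 => /lt_eqF ->.
exfalso; have [x Sx] := unbf (Num.max B1 B2).
have := HB1 _ (S_Sb Sx); have := HB2 _ (S_Sb Sx); rewrite aff_sc mulN1r.
rewrite real_ltNge ?num_real // => h2 h1 /negP; apply.
apply/ler_normlP; split.
  by apply: (le_trans h2); rewrite le_max lexx orbT.
by apply: (le_trans h1); rewrite le_max lexx.
Qed.

Definition hom a : affn R n := (a.1, 0).
Definition e1 : affn R n := (f0.1, -1).

Lemma PQ v : Pset (map hom J) [:: e1] v <-> C0 v /\ lin f0 v = 1.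
Proof.
split.
  case=> HJ HE; split.
    apply/JC0 => a aJ; have := HJ (hom a) (map_f _ aJ).
    by rewrite /aff /= addr0.
  by have := HE e1 (mem_head _ _); rewrite /aff /= => /eqP; rewrite subr_eq0 => /eqP.
case=> Cv l1; split.
  move=> b /mapP [a aJ ->]; rewrite /aff /= addr0.
  by rewrite lin_fst; move/JC0: Cv; apply.
by move=> e; rewrite inE => /eqP ->; rewrite /aff /e1 lin_fst l1 subrr.
Qed.

Lemma dir_pos : exists v, C0 v /\ lin f0 v = 1.
Proof.
have [w [Cw lw]] := dir_f.
have w0 := nz_of_lin lw.
have l0 := C0_pos Cw w0.
exists ((lin f0 w)^-1 *: w); split.
  by apply: C0Z => //; rewrite invr_ge0 ltW.
by rewrite linZ mulVf ?gt_eqF.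
Qed.

Lemma max_dir c : exists v, (C0 v /\ lin f0 v = 1) /\
  forall w, C0 w -> lin f0 w = 1 -> lin c w <= lin c v.
Proof.
have [v0 Hv0] := dir_pos.
have ne : exists x, Pset (map hom J) [:: e1] x by exists v0; apply/PQ.
have bd : exists B, forall x, Pset (map hom J) [:: e1] x -> aff (hom c) x <= B.
  case: (pselect (exists B, forall x, Pset (map hom J) [:: e1] x -> aff (hom c) x <= B)) => // nb.
  exfalso.
  have Hun : forall M : R, exists x, Pset (map hom J) [:: e1] x /\ M < aff (hom c) x.
    move=> M; apply: contra_notP nb => H; exists M => x Px; rewrite leNgt; apply/negP => lt.
    by apply: H; exists x.
  have [w [Jw Ew cw]] := LP_unbounded Hun.
  have Cw : C0 w by apply/JC0 => a aJ; exact: (Jw _ (map_f hom aJ)).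
  have w0 : w != 0 by apply: (@nz_of_lin (hom c)); rewrite gt_eqF.
  have := C0_pos Cw w0; have := Ew e1 (mem_head _ _).
  by rewrite /e1 lin_fst => ->; rewrite ltxx.
have [xs [Pxs Hxs]] := LP_attain ne bd.
exists xs; split; first exact/PQ.
move=> w Cw lw; have := Hxs w (proj2 (PQ w) (conj Cw lw)).
by rewrite /aff /= !addr0.
Qed.

Lemma K_exists : exists K, ext_value_inf S f f0 K.
Proof.
have [v1 [[C1 l1] H1]] := max_dir f.
have [v2 [[C2 l2] H2]] := max_dir (sc (-1) f).
have H2' : forall w, C0 w -> lin f0 w = 1 -> - lin f w <= - lin f v2.
  by move=> w Cw lw; have := H2 w Cw lw; rewrite !lin_sc !mulN1r.
have bound : forall w, C0 w -> lin f0 w = 1 ->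
    `|lin f w| <= Num.max (lin f v1) (- lin f v2).
  move=> w Cw lw; apply/ler_normlP; split.
    by apply: (le_trans (H2' w Cw lw)); rewrite le_max lexx orbT.
  by apply: (le_trans (H1 w Cw lw)); rewrite le_max lexx.
exists (Num.max (lin f v1) (- lin f v2)); split.
  have h1 := H2' v1 C1 l1; have h2 := H1 v2 C2 l2.
  have [le|lt] := leP (- lin f v2) (lin f v1).
    exists v1; split.
    - exact/rec_C0.
    - by apply: (@nz_of_lin f0); rewrite l1 oner_eq0.
    - by rewrite l1 oner_eq0.
    - by rewrite /hinf l1 divr1 ger0_norm; last lra.
  exists v2; split.
  - exact/rec_C0.
  - by apply: (@nz_of_lin f0); rewrite l2 oner_eq0.
  - by rewrite l2 oner_eq0.
  - by rewrite /hinf l2 divr1 ler0_norm; last lra.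
move=> w /rec_C0 Cw w0 lw.
have l0 := C0_pos Cw w0.
set w' := (lin f0 w)^-1 *: w.
have Cw' : C0 w' by apply: C0Z => //; rewrite invr_ge0 ltW.
have lw' : lin f0 w' = 1 by rewrite linZ mulVf.
have := bound w' Cw' lw'.
by rewrite /hinf linZ mulrC.
Qed.

Lemma K_pos K : ext_value_inf S f f0 K -> 0 < K.
Proof.
case=> _ HK; have [w [Cw lw]] := dir_f.
have w0 := nz_of_lin lw.
have l0 := C0_pos Cw w0.
have := HK w (proj2 (rec_C0 w) Cw) w0 (lt0r_neq0 l0).
apply: lt_le_trans; rewrite /hinf normr_gt0 mulf_neq0 //.
by rewrite invr_eq0 gt_eqF.
Qed.

Lemma K_side K s : ext_value_inf S f f0 K -> `|s| = 1 ->
  exists B, forall x, Sb x -> s * aff f x - K * aff f0 x <= B.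
Proof.
case=> _ HK s1.
case: (ub_or_dir (lc s (- K) f f0)) => [[B HB]|[w [Cw lw]]].
  by exists B => x Sx; have := HB x Sx; rewrite aff_lc mulNr.
exfalso; have w0 : w != 0 by apply: (@nz_of_lin (lc s (- K) f f0)); rewrite gt_eqF.
have l0 := C0_pos Cw w0.
have := HK w (proj2 (rec_C0 w) Cw) w0 (lt0r_neq0 l0).
rewrite lin_lc mulNr subr_gt0 in lw.
apply/negP; rewrite -ltNge /hinf normrM [`|(lin f0 w)^-1|]gtr0_norm ?invr_gt0 //.
rewrite ltr_pdivlMr //.
apply: (lt_le_trans lw).
by rewrite (le_trans (ler_norm _)) // normrM s1 mul1r.
Qed.

Lemma K_upper K : ext_value_inf S f f0 K ->
  exists C, forall x, Sb x -> `|aff f x| <= K * aff f0 x + C.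
Proof.
move=> HK.
have [B1 H1] := K_side HK (normr1 R).
have [B2 H2] : exists B, forall x, Sb x -> -1 * aff f x - K * aff f0 x <= B.
  by apply: K_side HK _; rewrite normrN normr1.
exists (Num.max B1 B2) => x Sx.
have := H1 x Sx; have := H2 x Sx; rewrite mul1r mulN1r => h2 h1.
have m1 := le_max B1 B2.
apply/ler_normlP; split.
  have : B2 <= Num.max B1 B2 by rewrite le_max lexx orbT.
  lra.
have : B1 <= Num.max B1 B2 by rewrite le_max lexx.
lra.
Qed.

Lemma K_dir K : ext_value_inf S f f0 K ->
  exists v, [/\ C0 v, 0 < lin f0 v & `|lin f v| = K * lin f0 v].
Proof.
case=> [[v [Rv v0 l0 hv]]] _.
have Cv := proj1 (rec_C0 v) Rv.
have lp := C0_pos Cv v0.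
exists v; split => //.
by rewrite -hv /hinf normrM [`|(lin f0 v)^-1|]gtr0_norm ?invr_gt0 // divfK ?gt_eqF.
Qed.

Definition Dt (t : R) := S `&` [set x | aff f0 x < t].

Lemma closure_Dt t : aff f0 x0 < t -> closure (Dt t) = Sb `&` [set x | aff f0 x <= t].
Proof. by move=> lt; exact: (closure_St hx0 (S_x0 hx0) lt). Qed.

Definition gt_ (t : R) : affn R n := ((-1) *: f0.1, t - f0.2).
Lemma aff_gt t x : aff (gt_ t) x = t - aff f0 x.
Proof. rewrite /aff lin_scl /=; ring. Qed.

Lemma P2 t x : Pset (J ++ [:: gt_ t]) [::] x <-> Sb x /\ aff f0 x <= t.
Proof.
split.
  case=> HJ _; split; first by apply/PJ; split => // a aJ; apply: HJ; rewrite mem_cat aJ.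
  by rewrite -subr_ge0 -aff_gt; apply: HJ; rewrite mem_cat mem_head orbT.
case=> /PJ [HJ _] le; split => // a; rewrite mem_cat => /orP[/HJ //|].
by rewrite inE => /eqP ->; rewrite aff_gt subr_ge0.
Qed.

Lemma ext_exists K t : ext_value_inf S f f0 K -> aff f0 x0 < t ->
  exists x, ext_pt (Dt t) f x.
Proof.
move=> HK lt.
have [C HC] := K_upper HK.
have Kp := K_pos HK.
have ne : exists x, Pset (J ++ [:: gt_ t]) [::] x.
  by exists x0; apply/P2; split; [exact: S_Sb (S_x0 hx0)| exact: ltW].
have bd : forall c, (forall x, aff c x <= `|aff f x|) ->
    exists B, forall x, Pset (J ++ [:: gt_ t]) [::] x -> aff c x <= B.
  move=> c Hc; exists (K * t + C) => x /P2 [Sx le].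
  apply: (le_trans (Hc x)); apply: (le_trans (HC x Sx)).
  by rewrite lerD2r ler_wpM2l // ltW.
have [xp [Pp Hp]] := LP_attain ne (bd f (fun x => ler_norm _)).
have Hsc : forall x, aff (sc (-1) f) x <= `|aff f x|.
  by move=> x; rewrite aff_sc mulN1r (le_trans (ler_norm _)) // normrN.
have [xm [Pm Hm]] := LP_attain ne (bd (sc (-1) f) Hsc).
move: Hm; rewrite aff_sc mulN1r => Hm.
have all_le : forall y, closure (Dt t) y -> `|aff f y| <= Num.max (aff f xp) (- aff f xm).
  move=> y; rewrite closure_Dt // => /(proj2 (P2 t y)) Py.
  have := Hp y Py; have := Hm y Py; rewrite aff_sc mulN1r => h1 h2.
  apply/ler_normlP; split.
    by apply: (le_trans h1); rewrite le_max lexx orbT.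
  by apply: (le_trans h2); rewrite le_max lexx.
have cp : closure (Dt t) xp by rewrite closure_Dt //; exact/P2.
have cm : closure (Dt t) xm by rewrite closure_Dt //; exact/P2.
have h1 := Hp xm (proj2 (P2 t xm) (proj1 (P2 t xm) Pm)).
have h2 := Hm xp (proj2 (P2 t xp) (proj1 (P2 t xp) Pp)).
rewrite aff_sc mulN1r in h2.
have [le|lt'] := leP (- aff f xm) (aff f xp).
  exists xp; split => // y /all_le.
  have -> : Num.max (aff f xp) (- aff f xm) = aff f xp by rewrite /Num.max ltNge le.
  by rewrite [`|aff f xp|]ger0_norm //; lra.
exists xm; split => // y /all_le.
have -> : Num.max (aff f xp) (- aff f xm) = - aff f xm by rewrite /Num.max lt'.
by rewrite [`|aff f xm|]ler0_norm //; lra.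
Qed.

Lemma bounds K : ext_value_inf S f f0 K -> exists D, 0 <= D /\
  forall t x, aff f0 x0 + 1 < t -> ext_pt (Dt t) f x ->
    K * t - D <= `|aff f x| /\ `|aff f x| <= K * t + D.
Proof.
move=> HK.
have [C HC] := K_upper HK.
have Kp := K_pos HK.
have [v [Cv lp hv]] := K_dir HK.
exists (`|C| + K * `|1 + aff f0 x0| + `|aff f x0|); split.
  by rewrite !addr_ge0 ?mulr_ge0 // ltW.
move=> t x lt [cx Hx].
have lt0 : aff f0 x0 < t by lra.
move: (cx); rewrite closure_Dt // => -[Sx le].
split; last first.
  apply: (le_trans (HC x Sx)).
  have : K * aff f0 x <= K * t by rewrite ler_wpM2l // ltW.
  have := ler_norm C; have : 0 <= K * `|1 + aff f0 x0| by rewrite mulr_ge0 // ltW.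
  have := normr_ge0 (aff f x0); lra.
set s := (t - 1 - aff f0 x0) / lin f0 v.
have s0 : 0 <= s.
  apply: divr_ge0; last exact: ltW.
  lra.
set y := x0 + s *: v.
have cy : closure (Dt t) y.
  rewrite closure_Dt //; split; first exact: Sb_ray (S_Sb (S_x0 hx0)) Cv s0.
  by rewrite /= /y affDZ /s divfK ?gt_eqF //; lra.
apply: le_trans (Hx y cy).
have : `|s * lin f v| <= `|aff f y| + `|aff f x0|.
  by rewrite /y affDZ -[X in `|X| <= _](addKr (aff f x0)) addrC ler_normB.
rewrite normrM (ger0_norm s0) hv.
have -> : s * (K * lin f0 v) = K * t - K * (1 + aff f0 x0).
  by rewrite /s; field; rewrite gt_eqF.
have : K * (1 + aff f0 x0) <= K * `|1 + aff f0 x0|.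
  by apply: ler_wpM2l; [exact: ltW | exact: ler_norm].
have := normr_ge0 C; lra.
Qed.
End Main.
Lemma cexpD (R : realType) (z w : R[i]) : cexp (z + w) = cexp z * cexp w.
Proof.
case: z => a b; case: w => c d; rewrite /cexp /=.
apply/eqP; rewrite eq_complex /= expRD cosD sinD.
by apply/andP; split; apply/eqP; ring.
Qed.

Lemma cmod_cexp1 (R : realType) (a b r : R) :
  cmod (cexp ((a +i* b) * r%:C) - 1) =
  Num.sqrt ((expR (a * r) * cos (b * r) - 1) ^+ 2 + (expR (a * r) * sin (b * r)) ^+ 2).
Proof.
by rewrite /cmod /cexp /= !mulr0 subr0 add0r subr0.
Qed.

Lemma cvg_cexp0 (R : realType) (T : Type) (F : set_system T) (FF : Filter F)
  (al : R[i]) (u : T -> R) : u @ F --> 0 ->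
  (fun t => cmod (cexp (al * (u t)%:C) - 1)) @ F --> (0 : R).
Proof.
case: al => a b => hu.
under eq_fun do rewrite cmod_cexp1.
have ha : (fun t => a * u t) @ F --> (0 : R).
  by rewrite -(mulr0 a); apply: cvgMl_tmp.
have hb : (fun t => b * u t) @ F --> (0 : R).
  by rewrite -(mulr0 b); apply: cvgMl_tmp.
have hE : (fun t => expR (a * u t)) @ F --> (1 : R).
  by rewrite -expR0; exact: (@continuous_cvg _ _ _ F FF (fun t => a * u t) expR 0 (@continuous_expR R 0) ha).
have hC : (fun t => cos (b * u t)) @ F --> (1 : R).
  by rewrite -cos0; exact: (@continuous_cvg _ _ _ F FF (fun t => b * u t) cos 0 (@continuous_cos R 0) hb).
have hS : (fun t => sin (b * u t)) @ F --> (0 : R).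
  by rewrite -sin0; exact: (@continuous_cvg _ _ _ F FF (fun t => b * u t) sin 0 (@continuous_sin R 0) hb).
have h1 : (fun t => expR (a * u t) * cos (b * u t) - 1) @ F --> (0 : R).
  rewrite -(subrr (1 : R)); apply: cvgB; last exact: cvg_cst.
  by rewrite -[X in _ --> X](mulr1 1); apply: cvgM.
have h2 : (fun t => expR (a * u t) * sin (b * u t)) @ F --> (0 : R).
  by rewrite -(mulr0 (1 : R)); apply: cvgM.
have h3 : (fun t => (expR (a * u t) * cos (b * u t) - 1) ^+ 2 +
     (expR (a * u t) * sin (b * u t)) ^+ 2) @ F --> (0 : R).
  have -> : (fun t => (expR (a * u t) * cos (b * u t) - 1) ^+ 2 +
     (expR (a * u t) * sin (b * u t)) ^+ 2) = (fun t => (expR (a * u t) * cos (b * u t) - 1) *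
     (expR (a * u t) * cos (b * u t) - 1) + (expR (a * u t) * sin (b * u t)) * (expR (a * u t) * sin (b * u t))).
    by apply: funext => t; rewrite !expr2.
  rewrite -[X in _ --> X](addr0 (0 : R)); apply: cvgD.
    by rewrite -[X in _ --> X](mulr0 (0 : R)); apply: cvgM.
  by rewrite -[X in _ --> X](mulr0 (0 : R)); apply: cvgM.
rewrite -sqrtr0; exact: (@continuous_cvg _ _ _ F FF _ Num.sqrt 0 (@sqrt_continuous R 0) h3).
Qed.

Lemma ratio_cvg (R : realType) (K D T : R) (L : R -> R) : 0 < K -> 0 <= D ->
  (forall t, T < t -> K * t - D <= L t /\ L t <= K * t + D) ->
  (fun t => L t / (K * t)) @ +oo --> (1 : R).
Proof.
move=> K0 D0 HL; apply/cvgrPdist_le => e e0.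
exists (Num.max T (Num.max 1 (D / (K * e)))); split; first exact: num_real.
move=> t; rewrite !gt_max => /and3P [Tt t1 Dt].
have t0 : 0 < t by lra.
have Kt : 0 < K * t by rewrite mulr_gt0.
have [l1 l2] := HL t Tt.
have -> : 1 - L t / (K * t) = (K * t - L t) / (K * t).
  by field; rewrite !lt0r_neq0.
rewrite normrM [`|(K * t)^-1|]gtr0_norm ?invr_gt0 // -ler_pdivlMr ?invr_gt0 // invrK.
rewrite ltr_pdivrMr ?mulr_gt0 // in Dt.
have : `|K * t - L t| <= D by apply/ler_normlP; split; lra.
have -> : e * (K * t) = t * (K * e) by ring.
lra.
Qed.

Theorem corollary1 (R : realType) (n : nat) (A : seq (affn R n))
  (f0 f : affn R n) (Delta : set 'rV[R]_n) (alpha : R[i]) (theta : R) :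
  arrangement A -> essential A ->
  nonconstant f0 ->
  nonconstant f -> hyp_in (hyperplane f) A ->
  growing A f0 Delta ->
  (forall M : R, exists2 x, Delta x & M < `|aff f x|) ->
  let Delta_t := fun t : R => Delta `&` [set x | aff f0 x < t] in
  let g := fun x => cexp (alpha * ((ln `|aff f x|)%:C + (theta *i))) in
  (exists K, ext_value_inf Delta f f0 K) /\
  (\forall t \near +oo, exists x, ext_pt (Delta_t t) f x) /\
  (forall (K : R) (xs : R -> 'rV[R]_n),
     ext_value_inf Delta f f0 K ->
     (\forall t \near +oo, ext_pt (Delta_t t) f (xs t)) ->
     let c_inf := cexp (alpha * ((ln K)%:C + (theta *i))) in
     exists eps : R -> R[i],
       (fun t => cmod (eps t)) @ +oo --> 0 /\
       \forall t \near +oo,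
         g (xs t) = c_inf * cexp (alpha * (ln t)%:C) * (1 + eps t)).
Proof.
move=> _ _ _ _ _ [[x0 [hx0 eD]] [_ gr]] unbf.
subst Delta; rewrite (Delta_S hx0) in unbf gr *.
move=> Delta_t g; rewrite {}/Delta_t {}/g.
have [K0 HK0] := K_exists hx0 gr unbf.
split; first by exists K0.
split.
  exists (aff f0 x0); split; first exact: num_real.
  by move=> t lt; exact: (ext_exists hx0 gr unbf HK0 lt).
move=> K xs HK [M [_ HM]].
have [D [D0 HD]] := bounds hx0 gr unbf HK.
have Kp := K_pos hx0 gr unbf HK.
set L := fun t => `|aff f (xs t)|.
set T := Num.max M (aff f0 x0 + 1).
have HL : forall t, T < t -> K * t - D <= L t /\ L t <= K * t + D.
  move=> t; rewrite gt_max => /andP [Mt lt].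
  exact: (HD t (xs t) lt (HM t Mt)).
pose eps := fun t => cexp (alpha * (ln (L t / (K * t)))%:C) - 1.
exists eps; split.
  apply: cvg_cexp0.
  rewrite -(ln1 R).
  have hr := ratio_cvg Kp D0 HL.
  have := @continuous_cvg _ _ _ _ _ (fun t => L t / (K * t)) (@ln R) 1 (continuous_ln ltr01) hr.
  exact.
exists (Num.max T (D / K)); split; first exact: num_real.
move=> t; rewrite gt_max => /andP [Tt DKt].
have DK : 0 <= D / K by rewrite divr_ge0 // ltW.
have t0 : 0 < t by lra.
have [l1 _] := HL t Tt.
have Lp : 0 < L t.
  rewrite ltr_pdivrMr // in DKt.
  have : D < K * t by rewrite mulrC.
  lra.
have -> : 1 + eps t = cexp (alpha * (ln (L t / (K * t)))%:C) by rewrite /eps addrC subrK.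
rewrite -!cexpD.
congr cexp.
rewrite ln_div ?posrE ?mulr_gt0 // lnM ?posrE //.
rewrite !rmorphB !rmorphD /=.
ring.
Qed.
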